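(* Let $V$ be finite, $\omega:V\to\mathbb{R}_{>0}$, $W:=\sum_{i\in V}\omega_i$, and vectors $\{v_i\}_{i\in V}$ with $\sum_{\{i,j\}\subseteq V,i\ne j}\omega_i\omega_j\|v_i-v_j\|^2=1$. Suppose $i_0\in V$ and let $L:=\{j\in V:\|v_{i_0}-v_j\|^2\le\frac{1}{8W^2}\}$ (nonempty as $i_0\in L$). For $j\in V$ let $\Delta(j,L):=\min_{i\in L}\|v_i-v_j\|^2$. Then $\sum_{j\in V\setminus L}\omega_j\Delta(j,L)\ge\frac{1}{8W}$. *)

(* Defs.v *)
From HB Require Import structures.
From mathcomp Require Import all_boot all_order all_algebra.
Set Implicit Arguments. Unset Strict Implicit. Unset Printing Implicit Defensive.
Import Order.TTheory GRing.Theory Num.Theory.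
Local Open Scope ring_scope.

Definition sqdist (R : realFieldType) (d : nat) (x y : 'rV[R]_d) : R :=
  \sum_(k < d) (x 0 k - y 0 k) ^+ 2.

(* sum over unordered pairs {i,j}, i <> j, of w_i w_j ||v_i - v_j||^2,
   written as half of the sum over ordered pairs (i,j) with i <> j *)
Definition pair_energy (R : realFieldType) (d : nat) (V : finType)
  (w : V -> R) (v : V -> 'rV[R]_d) : R :=
  2^-1 * \sum_(i : V) \sum_(j : V | i != j) w i * w j * sqdist (v i) (v j).

Definition Lset (R : realFieldType) (d : nat) (V : finType)
  (W : R) (v : V -> 'rV[R]_d) (i0 : V) : {set V} :=
  [set j | sqdist (v i0) (v j) <= (8 * W ^+ 2)^-1].

(* Delta(j, L) := min_{i in L} ||v_i - v_j||^2 ; the fold is seeded with the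
   value at i0, which is an element of L, so this is exactly the minimum over L
   whenever i0 \in L. *)
Definition Delta (R : realFieldType) (d : nat) (V : finType)
  (v : V -> 'rV[R]_d) (i0 : V) (L : {set V}) (j : V) : R :=
  \big[Num.min/sqdist (v i0) (v j)]_(i in L) sqdist (v i) (v j).

(* Main.v *)
Require Import Defs.
From HB Require Import structures.
From mathcomp Require Import all_boot all_order all_algebra.
From mathcomp Require Import ring lra.
Import Order.TTheory GRing.Theory Num.Theory.
Local Open Scope ring_scope.

Lemma sqdist_sym (R : realFieldType) d (x y : 'rV[R]_d) : sqdist x y = sqdist y x.
Proof. by apply: eq_bigr => k _; rewrite -sqrrN opprB. Qed.

Lemma sqdist_ge0 (R : realFieldType) d (x y : 'rV[R]_d) : 0 <= sqdist x y.
Proof. by apply: sumr_ge0 => k _; rewrite sqr_ge0. Qed.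

Lemma sqdist_xx (R : realFieldType) d (x : 'rV[R]_d) : sqdist x x = 0.
Proof. by apply: big1 => k _; rewrite subrr expr0n. Qed.

Lemma sq4 (R : realFieldType) d (x a b c y : 'rV[R]_d) :
  sqdist x y <= 4 * (sqdist x a + sqdist a b + sqdist b c + sqdist c y).
Proof.
rewrite /sqdist -!big_split mulr_sumr; apply: ler_sum => k _ /=.
set x1 := x 0 k; set a1 := a 0 k; set b1 := b 0 k; set c1 := c 0 k; set y1 := y 0 k.
have -> : x1 - y1 = (x1 - a1) + (a1 - b1) + (b1 - c1) + (c1 - y1) by ring.
set p := x1 - a1; set q := a1 - b1; set s := b1 - c1; set t := c1 - y1.
rewrite -subr_ge0.
have -> : 4 * (p ^+ 2 + q ^+ 2 + s ^+ 2 + t ^+ 2) - (p + q + s + t) ^+ 2 =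
  (p - q) ^+ 2 + (p - s) ^+ 2 + (p - t) ^+ 2 + (q - s) ^+ 2 + (q - t) ^+ 2 + (s - t) ^+ 2 by ring.
by rewrite !addr_ge0 // sqr_ge0.
Qed.

Lemma bigmin_attain (R : realFieldType) (I : finType) (P : pred I) (F : I -> R) x0 :
  let m := \big[Num.min/x0]_(i | P i) F i in
  m = x0 \/ exists i, P i /\ m = F i.
Proof.
apply: (big_ind (fun y => y = x0 \/ exists i, P i /\ y = F i)).
- by left.
- move=> a b Ha Hb; rewrite /Num.min /Order.min; case: ifP => _; [exact: Ha | exact: Hb].
- by move=> i Pi; right; exists i.
Qed.

Theorem mainTheorem11 (R : realFieldType) (d : nat) (V : finType)
  (w : V -> R) (v : V -> 'rV[R]_d) (i0 : V)
  (hw : forall i, 0 < w i)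
  (hE : pair_energy w v = 1) :
  let W := \sum_(i : V) w i in
  let L := Lset W v i0 in
  (8 * W)^-1 <= \sum_(j in ~: L) w j * Delta v i0 L j.
Proof.
cbv zeta.
set W := \sum_(i : V) w i; set L := Lset W v i0.
set r := (8 * W ^+ 2)^-1.
have Wpos : 0 < W.
  rewrite /W (bigD1 i0) //=; apply: ltr_wpDr; last exact: hw.
  by apply: sumr_ge0 => i _; exact: ltW.
have rpos : 0 < r by rewrite invr_gt0 mulr_gt0 // exprn_gt0.
pose D j := if j \in L then 0 else Delta v i0 L j.
have D0 : forall j, 0 <= D j.
  move=> j; rewrite /D; case: ifP => // _.
  apply: (big_ind (fun y => 0 <= y)); first exact: sqdist_ge0.
    by move=> a b Ha Hb; rewrite le_min Ha Hb.
  by move=> i _; exact: sqdist_ge0.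
have Hp : forall j, exists p, sqdist (v i0) (v p) <= r /\ sqdist (v p) (v j) <= D j.
  move=> j; rewrite /D; case: ifP => jL.
    exists j; split; last by rewrite sqdist_xx.
    by move: jL; rewrite inE.
  rewrite /Delta.
  have [->|[i [iL ->]]] := @bigmin_attain _ _ (fun i => i \in L) (fun i => sqdist (v i) (v j)) (sqdist (v i0) (v j)).
    by exists i0; rewrite sqdist_xx; split => //; exact: ltW.
  by exists i; split => //; move: iL; rewrite inE.
have Hij : forall i j, sqdist (v i) (v j) <= 4 * (D i + r + r + D j).
  move=> i j; have [p [p1 p2]] := Hp i; have [q [q1 q2]] := Hp j.
  apply: (le_trans (@sq4 _ _ (v i) (v p) (v i0) (v q) (v j))).
  rewrite ler_pM2l //; rewrite sqdist_sym in p2; rewrite sqdist_sym in p1.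
  by rewrite !lerD.
set S := \sum_(j in ~: L) w j * Delta v i0 L j.
have SD : S = \sum_j w j * D j.
  rewrite /S [RHS](bigID (fun j => j \in ~: L)) /= [X in _ + X]big1 ?addr0.
    by apply: eq_bigr => j; rewrite /D inE => /negbTE ->.
  by move=> j; rewrite inE negbK /D => ->; rewrite mulr0.
have key : 1 <= 2^-1 * \sum_(i : V) \sum_(j : V) w i * w j * (4 * (D i + r + r + D j)).
  rewrite -[X in X <= _]hE /pair_energy ler_pM2l ?invr_gt0 //; apply: ler_sum => i _.
  rewrite [X in _ <= X](bigID (fun j => i != j)) /= -[X in X <= _]addr0.
  apply: lerD.
    apply: ler_sum => j _; apply: ler_wpM2l; first by rewrite mulr_ge0 // ltW.
    exact: Hij.
  apply: sumr_ge0 => j _; apply: mulr_ge0; first by rewrite mulr_ge0 // ltW.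
  by rewrite mulr_ge0 // !addr_ge0 // ltW.
have expand : \sum_(i : V) \sum_(j : V) w i * w j * (4 * (D i + r + r + D j))
   = 4 * (2 * W * S + 2 * r * W ^+ 2).
  have E1 : forall i, \sum_(j : V) w i * w j * (4 * (D i + r + r + D j))
     = 4 * (w i * D i * W + 2 * r * w i * W + w i * \sum_j w j * D j).
    move=> i; rewrite /W !mulr_sumr -!big_split /= mulr_sumr.
    by apply: eq_bigr => j _; ring.
  rewrite (eq_bigr _ (fun i _ => E1 i)) -mulr_sumr; congr (_ * _).
  rewrite !big_split /= -!mulr_suml -SD -/W -mulr_sumr -/W.
  ring.
rewrite expand in key.
have rW : r * W ^+ 2 = 8^-1.
  rewrite /r invfM -mulrA mulVf ?mulr1 // expf_neq0 // gt_eqF //.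
have : 1 <= 4 * W * S + 2^-1.
  apply: le_trans key _; rewrite le_eqVlt; apply/orP; left; apply/eqP.
  have -> : 2 * r * W ^+ 2 = 2 * (r * W ^+ 2) by ring.
  rewrite rW; field; done.
move=> H.
have H2 : 8^-1 <= W * S by lra.
rewrite -(ler_pM2l Wpos).
have -> : W * (8 * W)^-1 = 8^-1 by field; rewrite gt_eqF.
exact: H2.
Qed.
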